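(* Let $T$ be a tree and $H$ a graph. Let $V\subseteq V(T(H))$ and let $V_1,V_2\subseteq V$ with $V_1\cup V_2=V$ and $V_1\cap V_2=\emptyset$ (one of them possibly empty). Suppose there are two vertices $u,v$ of $T$ and vertices $1,\dots,t$ of $H$ such that for each $i\in\{1,\dots,t\}$ the role of $u^i$ differs from the role of $v^i$. Then $T(H)$ has a matching of size $t$ such that the two ends of each of its edges have different roles.
   Context: Graph $T(H)$: for a tree $T$ and a graph $H$ with $V(H)=\{1,\dots,m\}$, $T(H)$ has vertices $v^i$ ($v\in V(T)$, $1\le i\le m$); for each $v$ the vertices $v^1,\dots,v^m$ span a copy $H^v$ of $H$ ($v^iv^j$ an edge iff $ij\in E(H)$), and $u^iv^i$ is an edge for each $i$ whenever $uv\in E(T)$. Roles with respect to $V_1,V_2$: each vertex of $T(H)$ has exactly one of three roles: belonging to $V_1$, belonging to $V_2$, or belonging to $V(T(H))\setminus V$. *)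

(* Defs.v *)
From mathcomp Require Import all_boot.
Set Implicit Arguments. Unset Strict Implicit. Unset Printing Implicit Defensive.

Definition simple_graph (T : finType) (e : rel T) : Prop :=
  symmetric e /\ irreflexive e.

Definition is_tree (T : finType) (e : rel T) : Prop :=
  simple_graph e /\ (forall x y : T, connect e x y) /\
  (forall s : seq T, uniq s -> 3 <= size s -> ~~ cycle e s).

(* The graph T(H): vertex (v, i) stands for v^i. *)
Definition TH_edge (T : finType) (m : nat) (eT : rel T) (eH : rel 'I_m)
  : rel (T * 'I_m) :=
  fun x y => ((x.1 == y.1) && eH x.2 y.2) || (eT x.1 y.1 && (x.2 == y.2)).

Definition role (A : finType) (V1 V2 : {set A}) (x : A) : nat :=
  if x \in V1 then 0 else if x \in V2 then 1 else 2.

Definition is_matching (A : finType) (e : rel A) (M : {set A * A}) : Prop :=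
  (forall p, p \in M -> e p.1 p.2) /\
  (forall p q, p \in M -> q \in M -> p != q ->
     [/\ p.1 != q.1, p.1 != q.2, p.2 != q.1 & p.2 != q.2]).

(* Main.v *)
Require Import Defs.
From mathcomp Require Import all_boot.

Lemma path_diff (A : finType) (e : rel A) (f : A -> nat) (x : A) (p : seq A) :
  path e x p -> f x != f (last x p) -> exists ab : A * A, e ab.1 ab.2 && (f ab.1 != f ab.2).
Proof.
elim: p x => [|y p IH] x /=; first by rewrite eqxx.
case/andP=> exy pp Hf.
case: (boolP (f x == f y)) => [/eqP Exy|Nxy].
  by apply: (IH y pp); rewrite -Exy.
by exists (x, y); rewrite /= exy.
Qed.

Theorem lemma1 (T : finType) (eT : rel T) (m : nat) (eH : rel 'I_m)
  (V V1 V2 : {set T * 'I_m}) (u v : T) (S : {set 'I_m}) :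
  is_tree eT -> simple_graph eH ->
  V1 :|: V2 = V -> [disjoint V1 & V2] ->
  (forall i, i \in S -> role V1 V2 (u, i) != role V1 V2 (v, i)) ->
  exists M : {set (T * 'I_m) * (T * 'I_m)},
    [/\ is_matching (TH_edge eT eH) M, #|M| = #|S| &
        forall p, p \in M -> role V1 V2 p.1 != role V1 V2 p.2].
Proof.
move=> [_ [Hc _]] _ _ _ Hr.
have /connectP [p pp Ev] := Hc u v; rewrite Ev in Hr.
pose P i := [pred ab : T * T | eT ab.1 ab.2 && (role V1 V2 (ab.1, i) != role V1 V2 (ab.2, i))].
pose F i := let ab := odflt (u, u) [pick ab | P i ab] in ((ab.1, i), (ab.2, i)).
have HF : forall i, i \in S -> eT (F i).1.1 (F i).2.1 &&
     (role V1 V2 (F i).1 != role V1 V2 (F i).2).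
  move=> i iS; rewrite /F; case: pickP => [ab /= Hab|H0] //=.
  have [ab Hab] := @path_diff _ eT (fun w => role V1 V2 (w, i)) u p pp (Hr i iS).
  by move: (H0 ab); rewrite /= Hab.
exists (F @: S); split.
- split.
  + move=> q /imsetP [i iS ->]; have /andP [H1 _] := HF i iS.
    by rewrite /TH_edge H1 /= eqxx orbT.
  + move=> q r /imsetP [i iS ->] /imsetP [j jS ->] Nqr.
    have Nij : i != j by apply: contra Nqr => /eqP ->.
    by rewrite /F /= !xpair_eqE !(negbTE Nij) !andbF.
- rewrite card_in_imset // => i j _ _ E.
  by have := congr1 (fun q => q.1.2) E.
- by move=> q /imsetP [i iS ->]; have /andP [_ H2] := HF i iS.
Qed.
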